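(* Let $\mathbb{M}$ be a multiplicative subgroup of $\mathbb{C}^*$, $\mathcal{K}\in\{\mathbb{M}^r,(\mathbb{M}\cup\{0\})^r\}$, and $\mathcal{X}\subseteq\mathbb{M}^n$ a multiplicative subgroup. Then: (i) There exist $\kappa\in\mathcal{K}$ and a nondegenerate solution of $f_\kappa(x)=0$ in $\mathcal{X}$ if and only if $\operatorname{rk}(N\operatorname{diag}(w)B^\top)=s$ for some $w\in\ker(N)\cap\mathcal{K}$. (ii) There exist $(\kappa,c)\in\mathcal{K}\times\mathbb{C}^d$ and a nondegenerate solution of $F_{\kappa,c}(x)=0$ in $\mathcal{X}$ if and only if the $n\times n$ matrix $\begin{pmatrix}N\operatorname{diag}(w)B^\top\operatorname{diag}(h)\\ W\end{pmatrix}$ has rank $n$ for some $w\in\ker(N)\cap\mathcal{K}$ and some $h\in\mathcal{X}$. For a fixed $c\in\mathbb{C}^d$, there exist $\kappa\in\mathcal{K}$ and a nondegenerate solution of $F_{\kappa,c}(x)=0$ in $\mathcal{X}$ if and only if this matrix has rank $n$ for some $w\in\ker(N)\cap\mathcal{K}$ and some $h\in\mathcal{X}$ with $c=Wh^{-1}$.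
   Context: Let $N\in\mathbb{C}^{s\times r}$ have rank $s$, $W\in\mathbb{C}^{d\times n}$ have rank $d=n-s$, $B\in\mathbb{Z}^{n\times r}$. $\circ$ is the Hadamard product, $h^{-1}$ the entrywise inverse, $x^B\in\mathbb{C}^r$ has $j$-th entry $\prod_i x_i^{b_{ij}}$. $f_\kappa(x)=N(\kappa\circ x^B)$ and $F_{\kappa,c}(x)=\begin{pmatrix}N(\kappa\circ x^B)\\ Wx-c\end{pmatrix}$. A solution $x^*$ of a system $h(x)=0$ of $t$ Laurent polynomials is nondegenerate if the Jacobian $J_h(x^* )$ with respect to $x$ has rank $t$. *)

(* Defs.v *)
From HB Require Import structures.
From mathcomp Require Import all_boot all_order all_algebra.
From mathcomp Require Import complex.
From mathcomp Require Import reals.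
Set Implicit Arguments. Unset Strict Implicit. Unset Printing Implicit Defensive.
Import Order.TTheory GRing.Theory Num.Theory.
Local Open Scope ring_scope.
Local Open Scope complex_scope.

(* Laurent polynomials in n variables over a ring, as finite formal sums of
   terms  c * x^e  with c a coefficient and e an integer exponent vector. *)
Definition laurent (F : Type) (n : nat) := seq (F * {ffun 'I_n -> int}).

Section Laurent.
Variable (F : fieldType) (n : nat).

Definition monom_eval (e : {ffun 'I_n -> int}) (x : 'cV[F]_n) : F :=
  \prod_(i < n) (x i 0) ^ (e i).

Definition leval (p : laurent F n) (x : 'cV[F]_n) : F :=
  \sum_(t <- p) t.1 * monom_eval t.2 x.

Definition lderiv (i : 'I_n) (p : laurent F n) : laurent F n :=
  map (fun t : F * {ffun 'I_n -> int} =>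
    (t.1 * (t.2 i)%:~R, [ffun k => t.2 k - (k == i)%:Z])) p.

Definition jacobian t (h : 'I_t -> laurent F n) (x : 'cV[F]_n) : 'M[F]_(t, n) :=
  \matrix_(k < t, i < n) leval (lderiv i (h k)) x.

Definition nondeg_sol t (h : 'I_t -> laurent F n) (x : 'cV[F]_n) : Prop :=
  (forall i, x i 0 != 0) /\ (forall k, leval (h k) x = 0) /\
  \rank (jacobian h x) = t.

Definition colexp r (B : 'M[int]_(n, r)) (j : 'I_r) : {ffun 'I_n -> int} :=
  [ffun i => B i j].

(* f_kappa(x) = N (kappa o x^B): k-th entry is sum_j N_kj kappa_j x^{B_j} *)
Definition f_sys s r (N : 'M[F]_(s, r)) (B : 'M[int]_(n, r)) (kappa : 'cV[F]_r)
  : 'I_s -> laurent F n :=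
  fun k => [seq (N k j * kappa j 0, colexp B j) | j <- enum 'I_r].

Definition unitexp (i : 'I_n) : {ffun 'I_n -> int} := [ffun k => (k == i)%:Z].
Definition lin_sys d (W : 'M[F]_(d, n)) (c : 'cV[F]_d) : 'I_d -> laurent F n :=
  fun k => (- c k 0, [ffun => 0%Z]) :: [seq (W k i, unitexp i) | i <- enum 'I_n].

(* F_{kappa,c}(x) = (N (kappa o x^B) ; W x - c) *)
Definition F_sys s r d (N : 'M[F]_(s, r)) (B : 'M[int]_(n, r)) (W : 'M[F]_(d, n))
  (kappa : 'cV[F]_r) (c : 'cV[F]_d) : 'I_(s + d) -> laurent F n :=
  fun k => match split k with
           | inl k1 => f_sys N B kappa k1
           | inr k2 => lin_sys W c k2
           end.

Definition mult_subgroup (M : F -> Prop) : Prop :=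
  [/\ M 1, ~ M 0, (forall a b, M a -> M b -> M (a * b)) &
      (forall a, M a -> M a^-1)].

Definition mult_subgroup_vec (M : F -> Prop) (X : 'cV[F]_n -> Prop) : Prop :=
  [/\ X (const_mx 1),
      (forall x y, X x -> X y -> X (map2_mx *%R x y)),
      (forall x, X x -> X (map_mx GRing.inv x)) &
      (forall x, X x -> forall i, M (x i 0))].

End Laurent.

(* K = M^r (withzero = false) or (M u {0})^r (withzero = true) *)
Definition Kset (F : fieldType) (M : F -> Prop) (withzero : bool) r
  (kappa : 'cV[F]_r) : Prop :=
  forall j, M (kappa j 0) \/ (withzero /\ kappa j 0 = 0).

(* Main.v *)
Require Import Defs.
From HB Require Import structures.
From mathcomp Require Import all_boot all_order all_algebra.
From mathcomp Require Import complex.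
From mathcomp Require Import reals.
Import Order.TTheory GRing.Theory Num.Theory.
Local Open Scope ring_scope.
Set Implicit Arguments. Unset Strict Implicit. Unset Printing Implicit Defensive.

Section Helpers.
Variables (F : fieldType) (n : nat).
Implicit Types (x y : 'cV[F]_n) (e : {ffun 'I_n -> int}).

Definition nz x := forall i, x i 0 != 0.

Lemma monom_mul e x y : monom_eval e (map2_mx *%R x y) = monom_eval e x * monom_eval e y.
Proof.
rewrite /monom_eval -big_split /=; apply: eq_bigr => i _.
by rewrite mxE expfzMl.
Qed.

Lemma monom_one e : monom_eval e (const_mx 1 : 'cV[F]_n) = 1.
Proof. by rewrite /monom_eval big1 // => i _; rewrite mxE exp1rz. Qed.

Lemma monom_inv e x : monom_eval e (map_mx GRing.inv x) = (monom_eval e x)^-1.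
Proof.
rewrite /monom_eval -prodfV; apply: eq_bigr => i _.
by rewrite mxE expfV.
Qed.

Lemma monom_shift e x i : nz x ->
  monom_eval [ffun k => e k - (k == i)%:Z] x = monom_eval e x * (x i 0)^-1.
Proof.
move=> hx; rewrite /monom_eval.
rewrite (eq_bigr (fun k => x k 0 ^ (e k) * (if k == i then (x i 0)^-1 else 1))).
  rewrite big_split /=; congr (_ * _).
  by rewrite -big_mkcond /= big_pred1_eq.
move=> k _; rewrite ffunE expfzDr //.
by case: eqP => [->|_]; rewrite ?exprN1 ?expr0z.
Qed.

Lemma monom_unitexp x i : monom_eval (unitexp i) x = x i 0.
Proof.
rewrite /monom_eval (bigD1 i) //= big1 ?mulr1.
  by rewrite ffunE eqxx expr1z.
by move=> k /negbTE hk; rewrite ffunE hk expr0z.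
Qed.

Lemma monom_zero x : monom_eval [ffun => 0%Z] x = 1.
Proof. by rewrite /monom_eval big1 // => k _; rewrite ffunE expr0z. Qed.

Lemma M_monom (M : F -> Prop) e x : mult_subgroup M -> (forall i, M (x i 0)) ->
  M (monom_eval e x).
Proof.
case=> M1 M0 MM MV hx; rewrite /monom_eval.
apply: (big_ind M) => // i _.
have Mp : forall k : nat, M (x i 0 ^+ k).
  by elim=> [|k IH]; rewrite ?expr0 // exprS; apply: MM.
by case: (e i) => k; [apply: Mp | apply: MV; apply: Mp].
Qed.

End Helpers.
Section Jac.
Variables (F : fieldType) (n s r d : nat).
Variables (N : 'M[F]_(s, r)) (B : 'M[int]_(n, r)) (W : 'M[F]_(d, n)).

Definition wv (kappa : 'cV[F]_r) (x : 'cV[F]_n) : 'cV[F]_r :=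
  \col_j (kappa j 0 * monom_eval (colexp B j) x).
Definition Btm : 'M[F]_(r, n) := (map_mx (fun z : int => z%:~R : F) B)^T.

Lemma leval_f kappa x k : leval (f_sys N B kappa k) x = (N *m wv kappa x) k 0.
Proof.
rewrite /leval /f_sys big_map big_enum /= mxE; apply: eq_bigr => j _.
by rewrite mxE mulrA.
Qed.

Lemma jac_f kappa x : nz x ->
  jacobian (f_sys N B kappa) x =
  N *m diag_mx (wv kappa x)^T *m Btm *m diag_mx (map_mx GRing.inv x)^T.
Proof.
move=> hx; apply/matrixP => k i.
rewrite mul_mx_diag !mxE /leval /lderiv /f_sys -map_comp big_map big_enum /=.
rewrite big_distrl /=; apply: eq_bigr => j _.
rewrite mul_mx_diag !mxE.
have -> : [ffun k0 => colexp B j k0 - (k0 == i)%:Z] = [ffun k0 => (colexp B j) k0 - (k0 == i)%:Z] by [].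
rewrite monom_shift // /colexp ffunE.
rewrite !mulrA; congr (_ * _); rewrite -!mulrA; congr (_ * _); congr (_ * _).
by rewrite mulrC.
Qed.

Lemma leval_lin c x k : leval (lin_sys W c k) x = (W *m x - c) k 0.
Proof.
rewrite /leval /lin_sys big_cons big_map big_enum /= monom_zero mulr1.
rewrite !mxE addrC; congr (_ + _); apply: eq_bigr => i _.
by rewrite monom_unitexp.
Qed.

Lemma jac_lin c x : jacobian (lin_sys W c) x = W.
Proof.
apply/matrixP => k i.
rewrite !mxE /leval /lderiv /lin_sys /= big_cons /= ffunE mulr0 mul0r add0r.
rewrite -map_comp big_map big_enum /= (bigD1 i) //= big1 ?addr0.
  rewrite ffunE eqxx mulr1.
  rewrite /monom_eval big1 ?mulr1 // => l _.
  by rewrite !ffunE subrr expr0z.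
move=> l /negbTE hl; rewrite ffunE eq_sym hl mulr0 mul0r //.
Qed.

Lemma jac_F kappa c x :
  jacobian (F_sys N B W kappa c) x =
  col_mx (jacobian (f_sys N B kappa) x) (jacobian (lin_sys W c) x).
Proof.
apply/matrixP => k i; rewrite !mxE /F_sys.
by case: (split k) => k'; rewrite mxE.
Qed.

End Jac.
Lemma rank_diag (F : fieldType) m n (A : 'M[F]_(m, n)) (h : 'cV[F]_n) :
  nz h -> \rank (A *m diag_mx h^T) = \rank A.
Proof.
move=> hh; apply: mxrankMfree; apply/row_freeP.
exists (diag_mx (map_mx GRing.inv h)^T); rewrite mulmx_diag -diag_const_mx.
by congr diag_mx; apply/matrixP => i j; rewrite !mxE mulfV.
Qed.

Section Main.
Variables (F : fieldType) (n s r d : nat).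
Variables (N : 'M[F]_(s, r)) (B : 'M[int]_(n, r)) (W : 'M[F]_(d, n)).
Variables (M : F -> Prop) (wz : bool) (X : 'cV[F]_n -> Prop).
Hypothesis hM : mult_subgroup M.
Hypothesis hX : mult_subgroup_vec M X.

Lemma xnz x : X x -> nz x.
Proof.
case: hM => _ M0 _ _; case: hX => _ _ _ XM hx i.
by apply/eqP => e; apply: M0; rewrite -e; apply: XM.
Qed.

Lemma Xinv x : X x -> X (map_mx GRing.inv x).
Proof. by case: hX => _ _ XV _; apply: XV. Qed.

Lemma K_wv kappa x : Kset M wz kappa -> X x -> Kset M wz (wv B kappa x).
Proof.
move=> hk hx j; rewrite mxE.
have Mm : M (monom_eval (colexp B j) x).
  by apply: M_monom => // i; case: hX => _ _ _; apply.
case: hM => _ _ MM _.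
case: (hk j) => [Mk|[wzT k0]]; first by left; apply: MM.
by right; split => //; rewrite k0 mul0r.
Qed.

Lemma wv_inv w h : X h -> wv B (wv B w h) (map_mx GRing.inv h) = w.
Proof.
move=> hh; apply/matrixP => j k; rewrite ord1 !mxE monom_inv -mulrA mulfV ?mulr1 //.
case: hM => _ M0 _ _; apply/eqP => e; apply: M0; rewrite -e.
by apply: M_monom => // i; case: hX => _ _ _; apply.
Qed.

Lemma invK (h : 'cV[F]_n) : map_mx GRing.inv (map_mx GRing.inv h) = h.
Proof. by apply/matrixP => i j; rewrite !mxE invrK. Qed.

Lemma ker_iff kappa x :
  (forall k, leval (f_sys N B kappa k) x = 0) <-> N *m wv B kappa x = 0.
Proof.
split => [H|H k]; last by rewrite leval_f H mxE.
by apply/matrixP => k j; rewrite ord1 -leval_f H mxE.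
Qed.

Lemma part1 :
  (exists kappa, Kset M wz kappa /\ exists x, X x /\ nondeg_sol (f_sys N B kappa) x)
   <->
  (exists w, N *m w = 0 /\ Kset M wz w /\ \rank (N *m diag_mx w^T *m Btm F B) = s).
Proof.
split.
  move=> [kappa [hk [x [hx [_ [hz hr]]]]]].
  exists (wv B kappa x); split; first by apply/ker_iff.
  split; first by apply: K_wv.
  rewrite -[RHS]hr jac_f; last by apply: xnz.
  by rewrite rank_diag //; apply: xnz; apply: Xinv.
move=> [w [hw [hk hr]]].
have X1 : X (const_mx 1) by case: hX.
have ew : wv B w (const_mx 1) = w.
  by apply/matrixP => j k; rewrite ord1 mxE monom_one mulr1.
exists w; split => //; exists (const_mx 1); split => //; split.
  by apply: xnz.
split; first by apply/ker_iff; rewrite ew.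
rewrite jac_f ?ew; last by apply: xnz.
by rewrite rank_diag //; apply: xnz; apply: Xinv.
Qed.

Lemma part3 (c : 'cV[F]_d) : (s + d)%N = n ->
  (exists kappa, Kset M wz kappa /\ exists x, X x /\ nondeg_sol (F_sys N B W kappa c) x)
   <->
  (exists w h, N *m w = 0 /\ Kset M wz w /\ X h /\ c = W *m map_mx GRing.inv h /\
      \rank (col_mx (N *m diag_mx w^T *m Btm F B *m diag_mx h^T) W) = n).
Proof.
move=> hn; split.
  move=> [kappa [hk [x [hx [_ [hz hr]]]]]].
  exists (wv B kappa x), (map_mx GRing.inv x).
  split.
    apply/ker_iff => k; move: (hz (lshift d k)).
    by rewrite /F_sys (unsplitK (inl k : 'I_s + 'I_d)).
  split; first by apply: K_wv.
  split; first by apply: Xinv.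
  split.
    rewrite invK; apply/matrixP => k j; rewrite ord1.
    move: (hz (rshift s k)); rewrite /F_sys (unsplitK (inr k : 'I_s + 'I_d)) leval_lin !mxE.
    by move/eqP; rewrite subr_eq0 => /eqP ->.
  by rewrite -[RHS]hn -[RHS]hr jac_F jac_f ?jac_lin //; apply: xnz.
move=> [w [h [hw [hk [hh [hc hr]]]]]].
exists (wv B w h); split; first by apply: K_wv.
exists (map_mx GRing.inv h); split; first by apply: Xinv.
have hx := Xinv hh.
split; first by apply: xnz.
split.
  move=> k; rewrite /F_sys; case: (split k) => k'.
    by move: k'; apply/ker_iff; rewrite wv_inv.
  by rewrite leval_lin hc subrr mxE.
by rewrite [RHS]hn -[RHS]hr jac_F jac_f ?jac_lin ?wv_inv ?invK //; apply: xnz.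
Qed.

End Main.

Local Open Scope complex_scope.

Theorem mainTheorem12 (R : realType) (s r n d : nat)
  (N : 'M[R[i]]_(s, r)) (W : 'M[R[i]]_(d, n)) (B : 'M[int]_(n, r))
  (M : R[i] -> Prop) (withzero : bool) (X : 'cV[R[i]]_n -> Prop) :
  \rank N = s -> (s + d)%N = n -> \rank W = d ->
  mult_subgroup M -> mult_subgroup_vec M X ->
  let K := Kset M withzero (r := r) in
  let Bt := (map_mx (fun z : int => z%:~R : R[i]) B)^T in
  ((exists kappa, K kappa /\ exists x, X x /\ nondeg_sol (f_sys N B kappa) x)
   <->
   (exists w, N *m w = 0 /\ K w /\ \rank (N *m diag_mx w^T *m Bt) = s))
  /\
  ((exists kappa c, K kappa /\ exists x, X x /\ nondeg_sol (F_sys N B W kappa c) x)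
   <->
   (exists w h, N *m w = 0 /\ K w /\ X h /\
      \rank (col_mx (N *m diag_mx w^T *m Bt *m diag_mx h^T) W) = n))
  /\
  (forall c : 'cV[R[i]]_d,
   (exists kappa, K kappa /\ exists x, X x /\ nondeg_sol (F_sys N B W kappa c) x)
   <->
   (exists w h, N *m w = 0 /\ K w /\ X h /\ c = W *m map_mx GRing.inv h /\
      \rank (col_mx (N *m diag_mx w^T *m Bt *m diag_mx h^T) W) = n)).
Proof.
move=> _ hn _ hM hX K Bt.
split; first exact: (part1 N B withzero hM hX).
split; last by move=> c; exact: (part3 N B W withzero hM hX c hn).
split.
  move=> [kappa [c [hk hx]]].
  have [w [h [? [? [? [_ ?]]]]]] : _ := (proj1 (part3 N B W withzero hM hX c hn)) (ex_intro _ kappa (conj hk hx)).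
  by exists w, h.
move=> [w [h [hw [hk [hh hr]]]]].
have [kappa [hk' hx]] := proj2 (part3 N B W withzero hM hX (W *m map_mx GRing.inv h) hn)
  (ex_intro _ w (ex_intro _ h (conj hw (conj hk (conj hh (conj erefl hr)))))).
by exists kappa, (W *m map_mx GRing.inv h).
Qed.
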